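(* Let $S$ be an $E$-solid locally inverse semigroup, $\rho$ an inverse semigroup congruence on $S$ whose idempotent classes are completely simple subsemigroups, $T=S/\rho$, and $\mathcal C$ the derived semigroupoid. For every arrow $a$ of $\mathcal C$ there is a unique stable arrow $b$ of $\mathcal C$ with $b\le a$.
   Context: The derived semigroupoid $\mathcal C$ has object set $T$ and arrows $\mathcal C(\alpha,\beta)=\{(\alpha,s,\beta)\in T\times S\times T:\alpha\cdot s\rho=\beta,\ \beta\cdot(s\rho)^{-1}=\alpha\}$, composition $(\alpha,s,\beta)\circ(\beta,t,\gamma)=(\alpha,st,\gamma)$. An arrow $(\alpha,s,\beta)$ is stable if $s\rho=\alpha^{-1}\beta$. The natural partial order on $\mathcal C$: $(\alpha,s,\beta)\le(\gamma,t,\delta)$ iff $\alpha=\gamma$, $\beta=\delta$ and $s\le t$ in the natural partial order of $S$ ($s\le t$ iff $s=et=tf$ for some idempotents $e,f$). Locally inverse: regular with every $eSe$ inverse; $E$-solid: idempotent-generated subsemigroup completely regular. *)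

(* Defs.v *)
From Stdlib Require Import ClassicalEpsilon.

Set Implicit Arguments.

Section Semigroups.
Variable S : Type.
Variable mul : S -> S -> S.
Local Infix "*" := mul.

Definition associative_op := forall x y z, x * (y * z) = (x * y) * z.

Definition idempotent (e : S) := e * e = e.

Definition is_inverse_of (x u : S) := x * u * x = x /\ u * x * u = u.

Definition regular := forall x, exists u, is_inverse_of x u.

Definition inverse_semigroup :=
  regular /\ forall e f, idempotent e -> idempotent f -> e * f = f * e.

(* the (unique, in an inverse semigroup) inverse x^{-1}, chosen by epsilon *)
Definition inv (x : S) : S :=
  epsilon (inhabits x) (fun u => is_inverse_of x u).

Definition nat_le (s t : S) :=
  exists e f, idempotent e /\ idempotent f /\ s = e * t /\ s = t * f.

Definition closed (A : S -> Prop) := forall a b, A a -> A b -> A (a * b).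

Definition inverse_sub (A : S -> Prop) :=
  closed A /\
  (forall a, A a -> exists u, A u /\ is_inverse_of a u) /\
  (forall e f, A e -> A f -> idempotent e -> idempotent f -> e * f = f * e).

Definition local_sub (e : S) : S -> Prop := fun x => exists s, x = e * s * e.

Definition locally_inverse :=
  regular /\ forall e, idempotent e -> inverse_sub (local_sub e).

Inductive idem_gen : S -> Prop :=
  | idem_gen_e : forall e, idempotent e -> idem_gen e
  | idem_gen_mul : forall a b, idem_gen a -> idem_gen b -> idem_gen (a * b).

(* A (a subsemigroup) is completely regular: every element lies in a
   subgroup, i.e. has an inverse in A commuting with it *)
Definition completely_regular_sub (A : S -> Prop) :=
  forall a, A a -> exists u, A u /\ is_inverse_of a u /\ a * u = u * a.

Definition E_solid := completely_regular_sub idem_gen.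

(* A (a subsemigroup) is simple: no proper two-sided ideals, i.e.
   every a lies in the principal ideal A^1 b A^1 of every b *)
Definition simple_sub (A : S -> Prop) :=
  forall a b, A a -> A b ->
    a = b \/ (exists x, A x /\ a = x * b) \/ (exists y, A y /\ a = b * y)
    \/ (exists x y, A x /\ A y /\ a = x * b * y).

(* e is a primitive idempotent of A (A has no zero here: minimal idempotent) *)
Definition primitive_in (A : S -> Prop) (e : S) :=
  A e /\ idempotent e /\
  forall f, A f -> idempotent f -> f = e * f -> f = f * e -> f = e.

Definition completely_simple_sub (A : S -> Prop) :=
  closed A /\ (exists a, A a) /\ simple_sub A /\ exists e, primitive_in A e.

End Semigroups.

Section Derived.
(* S with a surjective homomorphism phi onto T = S/rho, rho = ker phi *)
Variables (S T : Type) (mulS : S -> S -> S) (mulT : T -> T -> T) (phi : S -> T).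

(* arrows (alpha, s, beta) of the derived semigroupoid C(alpha, beta) *)
Definition is_arrow (alpha : T) (s : S) (beta : T) :=
  mulT alpha (phi s) = beta /\ mulT beta (inv mulT (phi s)) = alpha.

Definition stable_arrow (alpha : T) (s : S) (beta : T) :=
  phi s = mulT (inv mulT alpha) beta.

Definition arrow_le (a1 : T * S * T) (a2 : T * S * T) :=
  let '(al1, s1, be1) := a1 in let '(al2, s2, be2) := a2 in
  al1 = al2 /\ be1 = be2 /\ nat_le mulS s1 s2.

End Derived.

(* Main.v *)
Require Import Defs.
From Stdlib Require Import ClassicalEpsilon.
Set Implicit Arguments.

Lemma inv_spec (T : Type) (m : T -> T -> T) (H : regular m) x :
  is_inverse_of m x (inv m x).
Proof. unfold inv. apply epsilon_spec. apply H. Qed.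

Lemma idem_of_inv (T : Type) (m : T -> T -> T) (A : associative_op m) x u :
  m (m u x) u = u -> idempotent m (m u x).
Proof. intro H. unfold idempotent. rewrite A. rewrite H. reflexivity. Qed.

Lemma idem_of_inv' (T : Type) (m : T -> T -> T) (A : associative_op m) x u :
  m (m x u) x = x -> idempotent m (m x u).
Proof. intro H. unfold idempotent. rewrite A. rewrite H. reflexivity. Qed.

Lemma inv_unique (T : Type) (m : T -> T -> T) (A : associative_op m)
  (Hi : inverse_semigroup m) x u v :
  is_inverse_of m x u -> is_inverse_of m x v -> u = v.
Proof.
  intros [Hu1 Hu2] [Hv1 Hv2]. destruct Hi as [_ Hc].
  assert (E1 : u = m (m v x) u).
  { transitivity (m (m (m u x) (m v x)) u).
    - rewrite <- Hu2 at 1. rewrite <- Hv1 at 1. rewrite !A. reflexivity.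
    - rewrite (Hc (m u x) (m v x)) by (apply idem_of_inv; auto).
      rewrite <- (A (m v x) (m u x) u). rewrite Hu2. reflexivity. }
  assert (E2 : v = m (m v x) u).
  { transitivity (m v (m (m x v) (m x u))).
    - rewrite (Hc (m x v) (m x u)) by (apply idem_of_inv'; auto).
      rewrite <- Hv2 at 1. rewrite <- Hu1 at 1. rewrite !A. reflexivity.
    - rewrite !A. rewrite Hv2. reflexivity. }
  transitivity (m (m v x) u); [exact E1 | symmetry; exact E2].
Qed.

Lemma inv_eq (T : Type) (m : T -> T -> T) (A : associative_op m)
  (Hi : inverse_semigroup m) x u : is_inverse_of m x u -> inv m x = u.
Proof.
  intro H. apply (@inv_unique _ _ A Hi x). apply inv_spec. apply Hi. exact H.
Qed.

Lemma inv_idem (T : Type) (m : T -> T -> T) (A : associative_op m)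
  (Hi : inverse_semigroup m) e : idempotent m e -> inv m e = e.
Proof.
  intro He. unfold idempotent in He. apply (inv_eq A Hi). split; rewrite !He; reflexivity.
Qed.

Lemma inv_inv (T : Type) (m : T -> T -> T) (A : associative_op m)
  (Hi : inverse_semigroup m) x : inv m (inv m x) = x.
Proof.
  apply (inv_eq A Hi). destruct (inv_spec (proj1 Hi) x) as [H1 H2]. split; auto.
Qed.

Lemma inv_mul (T : Type) (m : T -> T -> T) (A : associative_op m)
  (Hi : inverse_semigroup m) x y : inv m (m x y) = m (inv m y) (inv m x).
Proof.
  apply (inv_eq A Hi).
  destruct (inv_spec (proj1 Hi) x) as [Hx1 Hx2].
  destruct (inv_spec (proj1 Hi) y) as [Hy1 Hy2].
  destruct Hi as [_ Hc].
  set (x' := inv m x) in *. set (y' := inv m y) in *.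
  split.
  - transitivity (m (m x (m (m y y') (m x' x))) y).
    + rewrite !A. reflexivity.
    + rewrite <- (Hc (m x' x) (m y y')) by (first [apply idem_of_inv; auto | apply idem_of_inv'; auto]).
      rewrite !A. rewrite Hx1. rewrite <- !A. rewrite (A y y' y), Hy1. reflexivity.
  - transitivity (m (m y' (m (m x' x) (m y y'))) x').
    + rewrite !A. reflexivity.
    + rewrite (Hc (m x' x) (m y y')) by (first [apply idem_of_inv; auto | apply idem_of_inv'; auto]).
      rewrite !A. rewrite Hy2. rewrite <- !A. rewrite (A x' x x'), Hx2. reflexivity.
Qed.

Lemma cs_prim (S : Type) (m : S -> S -> S) (A : associative_op m)
  (K : S -> Prop) (HK : completely_simple_sub m K) (f k : S) :
  K f -> K k -> idempotent m f -> idempotent m k -> k = m k f -> k = m f k -> k = f.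
Proof.
  intros Kf Kk If Ik H1 H2.
  destruct HK as [Hcl [_ [Hsimp [e [Ke [Iee Hprim]]]]]].
  unfold idempotent in Iee.
  assert (Iee2 : forall z, m e (m e z) = m e z) by (intro z; rewrite A, Iee; reflexivity).
  assert (Huv : exists u v, K u /\ K v /\ f = m (m u e) v).
  { destruct (Hsimp f e Kf Ke) as [Hq|[[x [Kx Hx]]|[[y [Ky Hy]]|[x [y [Kx [Ky Hxy]]]]]]].
    - exists e, e. rewrite Hq. rewrite !Iee. auto.
    - exists x, e. rewrite <- A, Iee. auto.
    - exists e, y. rewrite Iee. auto.
    - exists x, y. auto. }
  destruct Huv as [u [v [Ku [Kv Hf]]]].
  unfold idempotent in *.
  set (g := m (m (m (m e v) k) u) e).
  assert (Kg : K g) by (unfold g; repeat apply Hcl; auto).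
  assert (Ig : m g g = g).
  { unfold g. rewrite !A.
    replace (m (m (m (m (m (m (m e v) k) u) e) e) v) k) with (m (m (m (m e v) k) f) k).
    2:{ rewrite Hf. rewrite <- !A. rewrite Iee2. reflexivity. }
    rewrite <- (A (m (m e v) k) f k). rewrite <- H2. rewrite <- (A (m e v) k k), Ik. reflexivity. }
  assert (Hge : g = e).
  { apply Hprim; auto.
    - unfold g. rewrite !A. rewrite Iee. reflexivity.
    - unfold g. rewrite <- !A. rewrite Iee. reflexivity. }
  transitivity (m (m f k) f).
  - rewrite <- H2, <- H1. reflexivity.
  - transitivity (m (m u g) v).
    + unfold g. rewrite Hf. rewrite <- !A. reflexivity.
    + rewrite Hge. symmetry. exact Hf.
Qed.

Lemma nat_le_facts (S : Type) (m : S -> S -> S) (A : associative_op m) t s s' :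
  is_inverse_of m s s' -> nat_le m t s ->
  m (m t s') s = t /\ idempotent m (m t s') /\
  m (m s s') (m t s') = m t s' /\ m (m t s') (m s s') = m t s'.
Proof.
  intros [H1 H2] [e [h [Ie [Ih [Te Th]]]]]. unfold idempotent in *.
  assert (Tst : m (m t s') t = t).
  { transitivity (m (m e (m (m s s') s)) h).
    - rewrite Te at 1. rewrite Th at 1. rewrite !A. reflexivity.
    - rewrite H1. rewrite <- Te. rewrite Th. rewrite <- A, Ih. reflexivity. }
  assert (Fs : m (m t s') s = t).
  { rewrite Te at 1. rewrite <- !A. rewrite (A s s' s), H1. symmetry. exact Te. }
  split; [exact Fs|]. split; [|split].
  - unfold idempotent. rewrite A. rewrite Tst. reflexivity.
  - rewrite Th at 1. rewrite <- !A. set (X := m h s'). rewrite (A s' s X), (A s (m s' s) X), (A s s' s), H1.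
    unfold X. rewrite A, <- Th. reflexivity.
  - rewrite Te at 1. rewrite <- !A. rewrite (A s' s s'), H2.
    rewrite A, <- Te. reflexivity.
Qed.

Theorem lemma5p3
  (S T : Type) (mulS : S -> S -> S) (mulT : T -> T -> T) (phi : S -> T)
  (assocS : associative_op mulS) (assocT : associative_op mulT)
  (phi_hom : forall x y, phi (mulS x y) = mulT (phi x) (phi y))
  (phi_surj : forall t, exists s, phi s = t)
  (Hli : locally_inverse mulS)
  (Hsolid : E_solid mulS)
  (Hinv : inverse_semigroup mulT)
  (Hcs : forall e, idempotent mulT e ->
           completely_simple_sub mulS (fun x => phi x = e)) :
  forall (alpha : T) (s : S) (beta : T),
    is_arrow mulT phi alpha s beta ->
    exists t : S,
      is_arrow mulT phi alpha t beta /\ stable_arrow mulT phi alpha t beta /\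
      arrow_le mulS (alpha, t, beta) (alpha, s, beta) /\
      forall (alpha' : T) (t' : S) (beta' : T),
        is_arrow mulT phi alpha' t' beta' ->
        stable_arrow mulT phi alpha' t' beta' ->
        arrow_le mulS (alpha', t', beta') (alpha, s, beta) ->
        (alpha', t', beta') = (alpha, t, beta).
Proof.
  intros alpha s beta [Hab Hba].
  pose proof Hinv as Hinv0.
  destruct Hinv0 as [HregT HcT].
  destruct Hli as [HregS Hloc].
  destruct (HregS s) as [s' [Hs1 Hs2]].
  set (g := mulS s s').
  assert (Ig : idempotent mulS g) by (apply idem_of_inv'; auto).
  destruct (Hloc g Ig) as [_ [Hinvsub HcommL]].
  set (ia := inv mulT alpha).
  destruct (inv_spec HregT alpha) as [Ha1 Ha2]. fold ia in Ha1, Ha2.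
  set (a := mulT ia alpha).
  assert (Ia : idempotent mulT a) by (apply idem_of_inv; auto).
  assert (Ipg : idempotent mulT (phi g)).
  { unfold idempotent. rewrite <- phi_hom. rewrite Ig. reflexivity. }
  set (eps := mulT a (phi g)).
  assert (Ieps : idempotent mulT eps).
  { unfold idempotent, eps. rewrite <- assocT. rewrite (assocT (phi g) a (phi g)).
    rewrite (HcT (phi g) a Ipg Ia). rewrite <- assocT. rewrite Ipg.
    rewrite assocT, Ia. reflexivity. }
  destruct (phi_surj eps) as [k Hk].
  set (mm := mulS (mulS g k) g).
  destruct (Hinvsub mm (ex_intro _ k eq_refl)) as [w [[y Hy] [Hw1 Hw2]]].
  assert (Pmm : phi mm = eps).
  { unfold mm. rewrite !phi_hom, Hk. unfold eps.
    rewrite (assocT (phi g) a (phi g)), (HcT (phi g) a Ipg Ia).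
    rewrite <- (assocT a (phi g) (phi g)), Ipg, <- assocT, Ipg. reflexivity. }
  assert (Pw : phi w = eps).
  { apply (@inv_unique _ _ assocT Hinv eps).
    - split; rewrite <- Pmm, <- !phi_hom; [rewrite Hw1 | rewrite Hw2]; reflexivity.
    - unfold idempotent in Ieps. split; rewrite !Ieps; reflexivity. }
  set (f := mulS mm w).
  assert (Pf : phi f = eps).
  { unfold f. rewrite phi_hom, Pmm, Pw. exact Ieps. }
  assert (If : idempotent mulS f).
  { unfold f. apply idem_of_inv'; auto. }
  unfold idempotent in Ig.
  assert (Hgf : mulS g f = f).
  { unfold f, mm. rewrite !assocS. rewrite Ig. reflexivity. }
  assert (Hfg : mulS f g = f).
  { unfold f. rewrite Hy. rewrite <- !assocS. rewrite Ig. reflexivity. }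
  set (t := mulS f s).
  assert (Pgx : mulT (phi g) (phi s) = phi s).
  { unfold g. rewrite <- !phi_hom. rewrite Hs1. reflexivity. }
  assert (Pt : phi t = mulT ia beta).
  { unfold t. rewrite phi_hom, Pf. unfold eps, a. rewrite <- Hab.
    rewrite <- assocT, Pgx. rewrite assocT. reflexivity. }
  assert (Hle : nat_le mulS t s).
  { exists f, (mulS (mulS s' f) s). split; [exact If|]. split; [|split].
    - unfold idempotent. rewrite <- !assocS.
      rewrite (assocS s s' (mulS f s)). fold g.
      rewrite (assocS f g (mulS f s)), Hfg, (assocS f f s), If. reflexivity.
    - reflexivity.
    - unfold t. rewrite !assocS. fold g. rewrite Hgf. reflexivity. }
  exists t. split; [|split; [|split]].
  - split.
    + rewrite Pt, <- Hab, !assocT, Ha1. reflexivity.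
    + rewrite Pt. rewrite (inv_mul assocT Hinv). unfold ia. rewrite (inv_inv assocT Hinv).
      rewrite <- Hba at 1.
      destruct (inv_spec HregT beta) as [Hb1 _].
      rewrite !assocT, Hb1. exact Hba.
  - exact Pt.
  - split; [reflexivity | split; [reflexivity | exact Hle]].
  - intros alpha' t' beta' _ Hst [Ea [Eb Hle']]. subst alpha' beta'.
    assert (Pt' : phi t' = phi t) by (rewrite Pt; exact Hst).
    destruct (nat_le_facts assocS (conj Hs1 Hs2) Hle) as [F1 [I1 [G1 H1]]].
    destruct (nat_le_facts assocS (conj Hs1 Hs2) Hle') as [F2 [I2 [G2 H2]]].
    fold g in G1, H1, G2, H2.
    set (f1 := mulS t s') in *. set (f2 := mulS t' s') in *.
    assert (L1 : local_sub mulS g f1) by (exists f1; rewrite G1, H1; reflexivity).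
    assert (L2 : local_sub mulS g f2) by (exists f2; rewrite G2, H2; reflexivity).
    assert (C12 : mulS f1 f2 = mulS f2 f1) by (apply HcommL; auto).
    assert (P12 : phi f2 = phi f1) by (unfold f1, f2; rewrite !phi_hom, Pt'; reflexivity).
    assert (Ip1 : idempotent mulT (phi f1)).
    { unfold idempotent. rewrite <- phi_hom. rewrite I1. reflexivity. }
    unfold idempotent in I1, I2.
    set (h := mulS f1 f2).
    assert (Ih : idempotent mulS h).
    { unfold idempotent, h. rewrite <- assocS, (assocS f2 f1 f2), <- C12, <- assocS, I2, assocS, I1.
      reflexivity. }
    assert (Ph : phi h = phi f1) by (unfold h; rewrite phi_hom, P12; exact Ip1).
    assert (E1 : h = f1).
    { apply (cs_prim assocS (Hcs _ Ip1)); auto.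
      - unfold h. rewrite <- assocS, <- C12, assocS, I1. reflexivity.
      - unfold h. rewrite assocS, I1. reflexivity. }
    assert (E2 : h = f2).
    { apply (cs_prim assocS (Hcs _ Ip1)); auto.
      - unfold h. rewrite <- assocS, I2. reflexivity.
      - unfold h. rewrite (assocS f2 f1 f2), <- C12, <- assocS, I2. reflexivity. }
    assert (Ett : t' = t) by (rewrite <- F1, <- F2; fold f1 f2; rewrite <- E1, <- E2; reflexivity).
    rewrite Ett. reflexivity.
Qed.
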